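(* Let $a,b\geq1$ and let $\mu=(\mu_{ij})_{i,j\ge0}$ be a semi-infinite complex matrix with $\mu_{i+a,j+b}=\mu_{ij}$, and set $\widehat\mu_{ij}=\mu_{i,j+b}$. Define bilinear forms on $\mathbb C[z]$ by $\langle z^i,z^j\rangle_\mu=\mu_{ij}$ and $\langle z^i,z^j\rangle_{\widehat\mu}=\widehat\mu_{ij}$. Let $p^{(1)}_j,p^{(2)}_j$ and $\widehat p^{(1)}_j,\widehat p^{(2)}_j$ ($j\ge0$) be monic polynomials of degree $j$ with $$\langle p^{(1)}_i,p^{(2)}_j\rangle_\mu=\delta_{ij}h_i,\qquad \langle \widehat p^{(1)}_i,\widehat p^{(2)}_j\rangle_{\widehat\mu}=\delta_{ij}\widehat h_i,$$ and let $S_1,S_2,\widehat S_1,\widehat S_2$ be the semi-infinite matrices defined by $$p^{(1)}_i(z)=\sum_{k=0}^i(S_1)_{ik}z^k,\quad p^{(2)}_i(z)=h_i\sum_{k=0}^i(S_2^{-1})_{ki}z^k,$$ and analogously for $\widehat p^{(1)},\widehat p^{(2)}$ with $\widehat S_1,\widehat S_2,\widehat h$. Suppose these satisfy $$S_1\Lambda^a\widehat S_1^{-1}=S_2\widehat S_2^{-1}=:A,\qquad S_1\widehat S_1^{-1}=S_2\Lambda^{-b}\widehat S_2^{-1}=:B .$$ Then, writing $p^{(i)}$ (resp. $\widehat p^{(i)}$) for the semi-infinite column vector with $j$-th entry $p^{(i)}_j$ (resp. $\widehat p^{(i)}_j$), $h=\mathrm{diag}(h_0,h_1,\dots)$ and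 $\widehat h=\mathrm{diag}(\widehat h_0,\widehat h_1,\dots)$, $$A\widehat p^{(1)}=z^ap^{(1)},\qquad \widehat hA^Th^{-1}p^{(2)}=\widehat p^{(2)},\qquad B\widehat p^{(1)}=p^{(1)},\qquad \widehat hB^Th^{-1}p^{(2)}=z^b\widehat p^{(2)} .$$
   Context: In the semi-infinite setting, $\Lambda$ is the semi-infinite matrix $(\Lambda)_{ij}=\delta_{i+1,j}$ ($i,j\ge0$) and $\Lambda^{-1}$ denotes its transpose $(\Lambda^{-1})_{ij}=\delta_{i,j+1}$ (a right inverse only: $\Lambda^{-1}\Lambda=1-E_{11}$ with $(E_{11})_{ij}=\delta_{i0}\delta_{j0}$). $A^T,B^T$ denote transposes. All the $h_i,\widehat h_i$ are assumed nonzero. *)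

(* Defs.v *)
From mathcomp Require Import all_boot all_algebra.
From mathcomp.real_closed Require Import complex.
From mathcomp Require Import reals.
Set Implicit Arguments. Unset Strict Implicit. Unset Printing Implicit Defensive.
Import GRing.Theory.
Local Open Scope ring_scope.

Definition smat (T : Type) := nat -> nat -> T.

(* This is how entries of products of
   semi-infinite matrices (and matrix-vector products) are understood. *)
Definition fsum (V : nmodType) (f : nat -> V) (v : V) : Prop :=
  exists N : nat, (forall k, (N <= k)%N -> f k = 0) /\ \sum_(k < N) f k = v.

Definition mprod (C : nzRingType) (X Y Z : smat C) : Prop :=
  forall i j, fsum (fun k => X i k * Y k j) (Z i j).

Definition idm (C : nzRingType) : smat C := fun i j => (i == j)%:R.

Definition Lam (C : nzRingType) (n : nat) : smat C := fun i j => (i + n == j)%:R.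
(* Lami n = (Lambda^{-1})^n,   (Lambda^{-1})_{ij} = delta_{i,j+1} *)
Definition Lami (C : nzRingType) (n : nat) : smat C := fun i j => (i == j + n)%:R.

Definition bform (C : nzRingType) (mu : smat C) (p q : {poly C}) : C :=
  \sum_(i < size p) \sum_(j < size q) p`_i * q`_j * mu i j.

(* Main.v *)
Require Import Defs.
From mathcomp Require Import all_boot all_algebra.
From mathcomp.real_closed Require Import complex.
From mathcomp Require Import reals.
From mathcomp Require Import zify.
Import GRing.Theory.
Set Implicit Arguments. Unset Strict Implicit.
Local Open Scope ring_scope.

Lemma sum_widen (V : nmodType) (f : nat -> V) N M :
  (forall k, (N <= k)%N -> f k = 0) -> (N <= M)%N ->
  \sum_(k < M) f k = \sum_(k < N) f k.
Proof.
move=> f0 NM; rewrite -!(big_mkord xpredT) (big_cat_nat (leq0n N) NM) /=.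
rewrite [\sum_(N <= i < M) _]big_nat_cond [\sum_(N <= i < M | _) _]big1 ?addr0 //.
by move=> k /andP[/andP[Nk _] _]; exact: f0.
Qed.

Lemma fsum_val (V : nmodType) (f : nat -> V) v N :
  fsum f v -> (forall k, (N <= k)%N -> f k = 0) -> v = \sum_(k < N) f k.
Proof.
case=> N' [f0' <-] f0; case: (leqP N N') => hN.
  by rewrite (sum_widen f0 hN).
by rewrite (sum_widen f0' (ltnW hN)).
Qed.

Lemma sum_single (V : nmodType) (f : nat -> V) n N :
  (n < N)%N -> (forall k, k != n -> f k = 0) -> \sum_(k < N) f k = f n.
Proof.
move=> nN f0; rewrite (bigD1 (Ordinal nN)) //= big1 ?addr0 // => k kn.
by apply: f0; move: kn; rewrite -val_eqE.
Qed.

Lemma diag_coef (C : nzRingType) (f : nat -> C) i :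
  (\sum_(k < i.+1) f k *: 'X^k : {poly C})`_i = f i.
Proof.
rewrite coef_sum (@sum_single _ (fun k => (f k *: 'X^k)`_i) i i.+1 (ltnSn i)) ?coefZ ?coefXn ?eqxx ?mulr1 //.
by move=> k /negbTE kn; rewrite coefZ coefXn eq_sym kn mulr0.
Qed.

Lemma left_core (C : nzRingType) (Sh1 Sh1inv : smat C) (ph1 : nat -> {poly C})
  (t Y : nat -> C) N :
 (forall i k, (i < k)%N -> Sh1 i k = 0) ->
 (forall i k, (i < k)%N -> Sh1inv i k = 0) ->
 mprod Sh1inv Sh1 (idm C) ->
 (forall i, ph1 i = \sum_(k < i.+1) Sh1 i k *: 'X^k) ->
 (forall m, (N <= m)%N -> t m = 0) ->
 (forall j, fsum (fun m => t m * Sh1inv m j) (Y j)) ->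
 fsum (fun j => Y j *: ph1 j) (\sum_(k < N) t k *: 'X^k).
Proof.
move=> L1 L2 inv ph1E t0 Yf.
have YE j : Y j = \sum_(m < N) t m * Sh1inv m j.
  by apply: fsum_val (Yf j) _ => m /t0 ->; rewrite mul0r.
have Y0 j : (N <= j)%N -> Y j = 0.
  move=> Nj; rewrite YE big1 // => m _; rewrite L2 ?mulr0 //.
  exact: leq_trans (ltn_ord m) Nj.
have phE (j : 'I_N) : ph1 j = \sum_(k < N) Sh1 j k *: 'X^k.
  rewrite ph1E; symmetry; apply: (sum_widen (f := fun k => Sh1 j k *: 'X^k)) (ltn_ord j) => k jk.
  by rewrite L1 ?scale0r.
have ID m k : (m < N)%N -> \sum_(j < N) Sh1inv m j * Sh1 j k = (m == k)%:R.
  move=> mN; symmetry; apply: fsum_val (inv m k) _ => j Nj.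
  by rewrite L2 ?mul0r //; exact: leq_trans mN Nj.
exists N; split.
  by move=> j /Y0 ->; rewrite scale0r.
rewrite (eq_bigr (fun j : 'I_N => \sum_(k < N) (Y j * Sh1 j k) *: 'X^k)); last first.
  by move=> j _; rewrite phE scaler_sumr; apply: eq_bigr => k _; rewrite scalerA.
rewrite exchange_big /=; apply: eq_bigr => k _; rewrite -scaler_suml; congr (_ *: _).
rewrite (eq_bigr (fun j : 'I_N => \sum_(m < N) t m * (Sh1inv m j * Sh1 j k))); last first.
  by move=> j _; rewrite YE mulr_suml; apply: eq_bigr => m _; rewrite mulrA.
rewrite exchange_big /= (eq_bigr (fun m : 'I_N => t m * (m == k :> nat)%:R)); last first.
  by move=> m _; rewrite -mulr_sumr ID.
rewrite (@sum_single _ (fun m => t m * (m == k)%:R) k N (ltn_ord k)) ?eqxx ?mulr1 //.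
by move=> m /negbTE ->; rewrite mulr0.
Qed.

Lemma right_core (C : fieldType) (S2 S2inv : smat C) (p2 : nat -> {poly C})
  (h : nat -> C) (c : C) (u Y : nat -> C) N :
 (forall j m, (m < j)%N -> S2 j m = 0) ->
 (forall k j, (j < k)%N -> S2inv k j = 0) ->
 mprod S2inv S2 (idm C) ->
 (forall i, h i != 0) ->
 (forall i, p2 i = h i *: \sum_(k < i.+1) S2inv k i *: 'X^k) ->
 (forall m, (N <= m)%N -> u m = 0) ->
 (forall j, fsum (fun m => S2 j m * u m) (Y j)) ->
 fsum (fun j => (c * Y j / h j) *: p2 j) (c *: \sum_(k < N) u k *: 'X^k).
Proof.
move=> U1 U2 inv hn p2E u0 Yf.
have YE j : Y j = \sum_(m < N) S2 j m * u m.
  by apply: fsum_val (Yf j) _ => m /u0 ->; rewrite mulr0.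
have Y0 j : (N <= j)%N -> Y j = 0.
  move=> Nj; rewrite YE big1 // => m _; rewrite U1 ?mul0r //.
  exact: leq_trans (ltn_ord m) Nj.
have phE (j : 'I_N) : (c * Y j / h j) *: p2 j
    = c *: \sum_(k < N) (Y j * S2inv k j) *: 'X^k.
  rewrite p2E scalerA divfK // -scalerA; congr (_ *: _).
  rewrite scaler_sumr (@sum_widen _ (fun k => (Y j * S2inv k j) *: 'X^k) j.+1 N) ?ltn_ord //.
    by apply: eq_bigr => k _; rewrite scalerA.
  by move=> k jk; rewrite U2 ?mulr0 ?scale0r.
have ID k m : (m < N)%N -> \sum_(j < N) S2inv k j * S2 j m = (k == m)%:R.
  move=> mN; symmetry; apply: fsum_val (inv k m) _ => j Nj.
  by rewrite U1 ?mulr0 //; exact: leq_trans mN Nj.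
exists N; split.
  by move=> j /Y0 ->; rewrite mulr0 mul0r scale0r.
rewrite (eq_bigr _ (fun j _ => phE j)) -scaler_sumr; congr (_ *: _).
rewrite exchange_big /=; apply: eq_bigr => k _; rewrite -scaler_suml; congr (_ *: _).
rewrite (eq_bigr (fun j : 'I_N => \sum_(m < N) (S2inv k j * S2 j m) * u m)); last first.
  by move=> j _; rewrite YE mulr_suml; apply: eq_bigr => m _; rewrite mulrC mulrA.
rewrite exchange_big /= (eq_bigr (fun m : 'I_N => (k == m :> nat)%:R * u m)); last first.
  by move=> m _; rewrite -mulr_suml ID.
rewrite (@sum_single _ (fun m : nat => ((k : nat) == m)%:R * u m) k N (ltn_ord k)) ?eqxx ?mul1r //.
by move=> m /negbTE; rewrite eq_sym => ->; rewrite mul0r.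
Qed.
Unset Implicit Arguments.
Theorem proposition2p3 (R : realType) (a b : nat) (mu : smat R[i])
  (p1 p2 ph1 ph2 : nat -> {poly R[i]}) (h hh : nat -> R[i])
  (S1 S2 S2inv Sh1 Sh1inv Sh2inv A B : smat R[i]) :
  (1 <= a)%N -> (1 <= b)%N ->
  (forall i j, mu (i + a)%N (j + b)%N = mu i j) ->
  (forall j, p1 j \is monic /\ size (p1 j) = j.+1) ->
  (forall j, p2 j \is monic /\ size (p2 j) = j.+1) ->
  (forall j, ph1 j \is monic /\ size (ph1 j) = j.+1) ->
  (forall j, ph2 j \is monic /\ size (ph2 j) = j.+1) ->
  (forall i, h i != 0) -> (forall i, hh i != 0) ->
  (forall i j, bform mu (p1 i) (p2 j) = (i == j)%:R * h i) ->
  (forall i j, bform (fun k l => mu k (l + b)%N) (ph1 i) (ph2 j) = (i == j)%:R * hh i) ->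
  (* S1, Sh1 lower triangular; S2^{-1}, Sh2^{-1} upper triangular *)
  (forall i k, (i < k)%N -> S1 i k = 0) ->
  (forall i k, (i < k)%N -> Sh1 i k = 0) ->
  (forall k i, (i < k)%N -> S2inv k i = 0) ->
  (forall k i, (i < k)%N -> Sh2inv k i = 0) ->
  (forall i, p1 i = \sum_(k < i.+1) S1 i k *: 'X^k) ->
  (forall i, p2 i = h i *: \sum_(k < i.+1) S2inv k i *: 'X^k) ->
  (forall i, ph1 i = \sum_(k < i.+1) Sh1 i k *: 'X^k) ->
  (forall i, ph2 i = hh i *: \sum_(k < i.+1) Sh2inv k i *: 'X^k) ->
  (* S2 is the inverse of S2^{-1}, Sh1^{-1} is the inverse of Sh1 *)
  mprod S2 S2inv (idm R[i]) -> mprod S2inv S2 (idm R[i]) ->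
  mprod Sh1 Sh1inv (idm R[i]) -> mprod Sh1inv Sh1 (idm R[i]) ->
  (* A = S1 Lambda^a Sh1^{-1} = S2 Sh2^{-1} *)
  (exists T, mprod S1 (Lam R[i] a) T /\ mprod T Sh1inv A) ->
  mprod S2 Sh2inv A ->
  (* B = S1 Sh1^{-1} = S2 Lambda^{-b} Sh2^{-1} *)
  mprod S1 Sh1inv B ->
  (exists T, mprod S2 (Lami R[i] b) T /\ mprod T Sh2inv B) ->
  (forall i, fsum (fun j => A i j *: ph1 j) ('X^a * p1 i)) /\
  (forall i, fsum (fun j => (hh i * A j i / h j) *: p2 j) (ph2 i)) /\
  (forall i, fsum (fun j => B i j *: ph1 j) (p1 i)) /\
  (forall i, fsum (fun j => (hh i * B j i / h j) *: p2 j) ('X^b * ph2 i)).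
Proof.
move=> a1 b1 muper Mp1 Mp2 Mph1 Mph2 hn hhn orth1 orth2 L1 Lh1 U2 Uh2
  p1E p2E ph1E ph2E S2S2i S2iS2 Sh1Sh1i Sh1iSh1 [T [HT1 HT2]] HA HB1 [T' [HT'1 HT'2]].
have Sh1d n : Sh1 n n = 1.
  have [/monicP mon sz] := Mph1 n.
  by rewrite -mon lead_coefE sz /= ph1E (diag_coef (Sh1 n)).
have S2d n : S2inv n n != 0.
  have [/monicP mon sz] := Mp2 n.
  move: mon; rewrite lead_coefE sz /= p2E coefZ (diag_coef (fun k => S2inv k n)) => e.
  by apply/eqP => z; move: e; rewrite z mulr0 => /eqP; rewrite eq_sym oner_eq0.
have Lh1i : forall i j, (i < j)%N -> Sh1inv i j = 0.
  elim/ltn_ind => n IH j ij.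
  have z : forall k, (n.+1 <= k)%N -> Sh1 n k * Sh1inv k j = 0.
    by move=> k ik; rewrite Lh1 ?mul0r.
  have := fsum_val (Sh1Sh1i n j) z.
  rewrite /idm ltn_eqF // big_ord_recr /= big1 ?add0r ?Sh1d ?mul1r //.
  by move=> k _; rewrite IH ?mulr0 // (ltn_trans (ltn_ord k)).
have U2i : forall j i, (j < i)%N -> S2 i j = 0.
  elim/ltn_ind => j IH n ji.
  have z : forall k, (j.+1 <= k)%N -> S2 n k * S2inv k j = 0.
    by move=> k ik; rewrite U2 ?mulr0.
  have := fsum_val (S2S2i n j) z.
  rewrite /idm gtn_eqF // big_ord_recr /= big1 ?add0r.
    by move=> /esym /eqP; rewrite mulf_eq0 (negbTE (S2d j)) orbF => /eqP.
  by move=> k _; rewrite IH ?mul0r // (ltn_trans (ltn_ord k)).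
split; [|split; [|split]] => n.
- have TE m : T n m = \sum_(k < n.+1) S1 n k * (((k:nat) + a)%N == m)%:R.
    by apply: fsum_val (HT1 n m) _ => k nk; rewrite L1 ?mul0r.
  have T0 m : ((n + a).+1 <= m)%N -> T n m = 0.
    move=> hm; rewrite TE big1 // => k _; rewrite ltn_eqF ?mulr0 //.
    by have := ltn_ord k; lia.
  suff -> : 'X^a * p1 n = \sum_(k < (n + a).+1) T n k *: 'X^k.
    exact: (left_core Lh1 Lh1i Sh1iSh1 ph1E T0 (HT2 n)).
  rewrite p1E mulr_sumr (eq_bigr (fun k : 'I_(n + a).+1 =>
     \sum_(m < n.+1) (S1 n m * (((m:nat) + a)%N == k)%:R) *: 'X^k)); last first.
    by move=> k _; rewrite TE scaler_suml.
  rewrite exchange_big /=; apply: eq_bigr => m _.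
  rewrite (@sum_single _ (fun k => (S1 n m * (((m:nat) + a)%N == k)%:R) *: 'X^k) ((m:nat) + a)%N) ?eqxx ?mulr1.
  + by rewrite -scalerAr -exprD addnC.
  + by have := ltn_ord m; lia.
  by move=> k /negbTE; rewrite eq_sym => ->; rewrite mulr0 scale0r.
- rewrite ph2E; apply: (@right_core _ _ _ _ _ (hh n) (fun m => Sh2inv m n)) (fun j m h => U2i m j h) U2 S2iS2 hn p2E _ _.
    by move=> m hm; rewrite Uh2.
  by move=> j; exact: HA j n.
- rewrite p1E; apply: (left_core Lh1 Lh1i Sh1iSh1 ph1E (t := S1 n)) _ (HB1 n).
  by move=> m hm; rewrite L1.
- pose u m := \sum_(k < n.+1) ((m:nat) == ((k:nat) + b)%N)%:R * Sh2inv k n.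
  have T'E j k : T' j k = S2 j (k + b).
    have z : forall m, ((k + b).+1 <= m)%N -> S2 j m * Lami R[i] b m k = 0.
      by move=> m hm; rewrite /Lami gtn_eqF ?mulr0.
    rewrite (fsum_val (HT'1 j k) z) /Lami.
    rewrite (@sum_single _ (fun m => S2 j m * ((m:nat) == ((k:nat) + b)%N)%:R) ((k:nat) + b)%N) ?eqxx ?mulr1 //.
    by move=> m /negbTE ->; rewrite mulr0.
  have u0 m : ((n + b).+1 <= m)%N -> u m = 0.
    move=> hm; rewrite /u big1 // => k _; rewrite gtn_eqF ?mul0r //.
    by have := ltn_ord k; lia.
  suff -> : 'X^b * ph2 n = hh n *: \sum_(m < (n + b).+1) u m *: 'X^m.
    apply: (@right_core _ _ _ _ _ (hh n) u _ _ (fun j m h => U2i m j h) U2 S2iS2 hn p2E u0).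
    move=> j; exists (n + b).+1; split.
      by move=> m /u0 ->; rewrite mulr0.
    have z : forall k, (n.+1 <= k)%N -> T' j k * Sh2inv k n = 0.
      by move=> k hk; rewrite Uh2 ?mulr0.
    rewrite (fsum_val (HT'2 j n) z).
    rewrite (eq_bigr (fun m : 'I_(n + b).+1 => \sum_(k < n.+1) S2 j m * (((m:nat) == ((k:nat) + b)%N)%:R * Sh2inv k n))); last first.
      by move=> m _; rewrite mulr_sumr.
    rewrite exchange_big /=; apply: eq_bigr => k _; rewrite T'E.
    rewrite (@sum_single _ (fun m => S2 j m * (((m:nat) == ((k:nat) + b)%N)%:R * Sh2inv k n)) ((k:nat) + b)%N) ?eqxx ?mul1r //.
      by have := ltn_ord k; lia.
    by move=> m /negbTE ->; rewrite mul0r mulr0.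
  rewrite ph2E -scalerAr; congr (_ *: _).
  rewrite mulr_sumr (eq_bigr (fun m : 'I_(n + b).+1 =>
     \sum_(k < n.+1) (((m:nat) == ((k:nat) + b)%N)%:R * Sh2inv k n) *: 'X^m)); last first.
    by move=> m _; rewrite /u scaler_suml.
  rewrite [RHS]exchange_big /=; apply: eq_bigr => k _.
  rewrite (@sum_single _ (fun m => (((m:nat) == ((k:nat) + b)%N)%:R * Sh2inv k n) *: 'X^m) ((k:nat) + b)%N) ?eqxx ?mul1r.
  + by rewrite -scalerAr -exprD addnC.
  + by have := ltn_ord k; lia.
  by move=> m /negbTE ->; rewrite mul0r scale0r.
Qed.
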